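(* For $t\in\mathbb R$ and $T>1$ let $K_T(t)=\{k\in K:a_tk\in HKA^+_{\log T}\}$. Then: (1) for all $0\le t<\log T$, $e\in K_T(t)$; (2) for all $t>\log T$, $K_T(t)=\emptyset$; (3) for any $\epsilon>0$ there exists $T_0(\epsilon)\ge1$ such that $K_T(t)\subset K_\epsilon M$ for all $t>T_0(\epsilon)$.
   Context: $G=\mathrm{PSL}_2(\mathbb C)$, $K=\mathrm{PSU}(2)$, $a_t=\mathrm{diag}(e^{t/2},e^{-t/2})$, $A^+_s=\{a_t:0\le t\le s\}$, $M=\{\mathrm{diag}(e^{i\theta},e^{-i\theta})\}$, $H$ the stabilizer in $G$ of the unit circle centered at $0$. With a fixed left-invariant metric on $G$, $U_\epsilon$ is the $\epsilon$-ball around $e$ and $K_\epsilon=K\cap U_\epsilon$. *)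

(* Defs.v *)
From HB Require Import structures.
From mathcomp Require Import all_boot all_order all_algebra.
From mathcomp Require Import reals.
From mathcomp Require Import sequences.
From mathcomp.analysis Require Import exp.
From mathcomp Require Import classical_sets.
From mathcomp Require Import complex.
Set Implicit Arguments. Unset Strict Implicit. Unset Printing Implicit Defensive.
Import Order.TTheory GRing.Theory Num.Theory.
Local Open Scope ring_scope.

Section PSL2C.
Variable R : realType.
Local Notation C := R[i].
Local Notation M2 := 'M[C]_2.

Definition mx2 (a b c d : C) : M2 :=
  \matrix_(i < 2, j < 2)
    if (i : nat) == 0%N then (if (j : nat) == 0%N then a else b)
    else (if (j : nat) == 0%N then c else d).

Definition i0 : 'I_2 := ord0.
Definition i1 : 'I_2 := ord_max.

(** G = PSL_2(C) is represented through its preimage SL_2(C); every subset of G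
    below is represented by its (sign-saturated) preimage in SL_2(C). *)
Definition SL2 (g : M2) : Prop := \det g = 1.

Definition adjC (g : M2) : M2 := map_mx (@conjc R) g^T.

Definition Kset (k : M2) : Prop := SL2 k /\ adjC k *m k = 1%:M.

Definition a_ (t : R) : M2 := mx2 ((expR (t / 2))%:C)%C 0 0 ((expR (- t / 2))%:C)%C.

Definition Aplus (s : R) (g : M2) : Prop := exists r : R, 0 <= r <= s /\ g = a_ r.

Definition Mset (g : M2) : Prop := exists z : C, `|z| = 1 /\ g = mx2 z 0 0 z^-1.

Definition unit_circle (z : C) : Prop := `|z| = 1.

(** g = [[a,b],[c,d]] maps the unit circle S onto itself under the Moebius action
    z |-> (a z + b)/(c z + d) on the Riemann sphere: no point of S is sent to
    infinity, g(S) is contained in S, and S is contained in g(S). *)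
Definition stabilizes_unit_circle (g : M2) : Prop :=
  let a := g i0 i0 in let b := g i0 i1 in let c := g i1 i0 in let d := g i1 i1 in
  (forall z, unit_circle z -> c * z + d != 0 /\ unit_circle ((a * z + b) / (c * z + d)))
  /\ (forall w, unit_circle w -> exists z, unit_circle z /\ (a * z + b) / (c * z + d) = w).

Definition Hset (g : M2) : Prop := SL2 g /\ stabilizes_unit_circle g.

Definition HKAplus (s : R) (g : M2) : Prop :=
  exists h k a, Hset h /\ Kset k /\ Aplus s a /\ g = h *m k *m a.

Definition K_T (T t : R) (k : M2) : Prop := Kset k /\ HKAplus (ln T) (a_ t *m k).

(** entrywise norm on 2x2 complex matrices (defines the usual topology) *)
Definition mxnorm (g : M2) : R := \sum_(i < 2) \sum_(j < 2) Normc.normc (g i j).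

(** A left-invariant metric on G = PSL_2(C) compatible with its Lie group topology,
    given as a function on SL_2(C) that is invariant under g |-> -g. *)
Definition left_inv_metric (dist : M2 -> M2 -> R) : Prop :=
  (forall g h, SL2 g -> SL2 h -> 0 <= dist g h) /\
  (forall g h, SL2 g -> SL2 h -> dist g h = dist h g) /\
      (forall g h, SL2 g -> SL2 h -> dist g h = dist g (- h)) /\
      (forall g h, SL2 g -> SL2 h -> (dist g h = 0 <-> (g = h \/ g = - h))) /\
      (forall g h l, SL2 g -> SL2 h -> SL2 l -> dist g l <= dist g h + dist h l) /\
      (forall x g h, SL2 x -> SL2 g -> SL2 h -> dist (x *m g) (x *m h) = dist g h) /\
      (forall eps, 0 < eps -> exists2 del, 0 < del &
          forall g, SL2 g -> mxnorm (g - 1%:M) < del -> dist 1%:M g < eps) /\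
    (forall del, 0 < del -> exists2 eps, 0 < eps &
          forall g, SL2 g -> dist 1%:M g < eps ->
             mxnorm (g - 1%:M) < del \/ mxnorm (g + 1%:M) < del).

Definition K_eps (dist : M2 -> M2 -> R) (eps : R) (k : M2) : Prop :=
  Kset k /\ dist 1%:M k < eps.

Definition K_eps_M (dist : M2 -> M2 -> R) (eps : R) (g : M2) : Prop :=
  exists k m, K_eps dist eps k /\ Mset m /\ g = k *m m.

End PSL2C.

(* Main.v *)
Require Import Defs.
From HB Require Import structures.
From mathcomp Require Import all_boot all_order all_algebra.
From mathcomp Require Import reals.
From mathcomp Require Import sequences.
From mathcomp.analysis Require Import exp.
From mathcomp Require Import classical_sets.
From mathcomp Require Import complex.
From mathcomp Require Import ring lra.
Import Order.TTheory GRing.Theory Num.Theory.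
Local Open Scope ring_scope.
Local Open Scope complex_scope.
Lemma ord2_cases (i : 'I_2) : i = i0 \/ i = i1.
Proof. case: i => [[|[|//]]] Hi; [left|right]; exact: val_inj. Qed.

Lemma big2 {V : nmodType} (F : 'I_2 -> V) : \sum_(i < 2) F i = F i0 + F i1.
Proof. rewrite big_ord_recr big_ord1 /=. congr (F _ + F _); exact: val_inj. Qed.

Lemma mx2E {R : realType} (a b c d : R[i]) :
  (mx2 a b c d) i0 i0 = a /\ (mx2 a b c d) i0 i1 = b /\
  (mx2 a b c d) i1 i0 = c /\ (mx2 a b c d) i1 i1 = d.
Proof. by rewrite !mxE. Qed.

Lemma mx2_eta {R : realType} (M : 'M[R[i]]_2) :
  M = mx2 (M i0 i0) (M i0 i1) (M i1 i0) (M i1 i1).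
Proof.
apply/matrixP => i j; rewrite mxE.
by case: (ord2_cases i) => ->; case: (ord2_cases j) => ->.
Qed.

Lemma mx2_ext {R : realType} (M N : 'M[R[i]]_2) :
  M i0 i0 = N i0 i0 -> M i0 i1 = N i0 i1 -> M i1 i0 = N i1 i0 -> M i1 i1 = N i1 i1 -> M = N.
Proof. by move=> *; rewrite (mx2_eta M) (mx2_eta N); congr mx2. Qed.

Lemma mx2_inj {R : realType} (a b c d a' b' c' d' : R[i]) :
  mx2 a b c d = mx2 a' b' c' d' -> [/\ a = a', b = b', c = c' & d = d'].
Proof.
move=> E; have := mx2E a b c d; rewrite E.
have [-> [-> [-> ->]]] := mx2E a' b' c' d'.
by case=> -> [-> [-> ->]].
Qed.

Lemma mx2_mul {R : realType} (a b c d a' b' c' d' : R[i]) :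
  mx2 a b c d *m mx2 a' b' c' d' =
  mx2 (a * a' + b * c') (a * b' + b * d') (c * a' + d * c') (c * b' + d * d').
Proof. by apply: mx2_ext; rewrite !mxE !big2 !mxE. Qed.

Lemma mx2_adj {R : realType} (a b c d : R[i]) :
  adjC (mx2 a b c d) = mx2 (conjc a) (conjc c) (conjc b) (conjc d).
Proof. by apply: mx2_ext; rewrite /adjC !mxE. Qed.

Lemma mx2_det {R : realType} (a b c d : R[i]) :
  \det (mx2 a b c d) = a * d - b * c.
Proof.
rewrite (expand_det_row _ ord0) big2 /cofactor !det_mx11 /= !mxE /=.
rewrite !expr0 !expr1 !mul1r. rewrite /bump /=. ring.
Qed.

Lemma mx2_sub {R : realType} (a b c d a' b' c' d' : R[i]) :
  mx2 a b c d - mx2 a' b' c' d' = mx2 (a - a') (b - b') (c - c') (d - d').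
Proof. by apply: mx2_ext; rewrite !mxE. Qed.

Lemma mx2_one {R : realType} : (1%:M : 'M[R[i]]_2) = mx2 1 0 0 1.
Proof. by apply: mx2_ext; rewrite !mxE. Qed.
Definition Nc {R : realType} (z : R[i]) : R := let: a +i* b := z in a ^+ 2 + b ^+ 2.
Definition Rec {R : realType} (z : R[i]) : R := let: a +i* b := z in a.

Lemma Nc_ge0 {R : realType} (z : R[i]) : 0 <= Nc z.
Proof. case: z => a b /=; nra. Qed.

Lemma NcM {R : realType} (x y : R[i]) : Nc (x * y) = Nc x * Nc y.
Proof. case: x => a b; case: y => c d. rewrite /Nc /=. ring. Qed.

Lemma NcN {R : realType} (x : R[i]) : Nc (- x) = Nc x.
Proof. case: x => a b; rewrite /Nc /=. ring. Qed.

Lemma NcJ {R : realType} (x : R[i]) : Nc (conjc x) = Nc x.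
Proof. case: x => a b; rewrite /Nc /=. ring. Qed.

Lemma NcR {R : realType} (r : R) : Nc (r%:C)%C = r ^+ 2.
Proof. rewrite /Nc /=. ring. Qed.

Lemma Nc_C {R : realType} (x : R[i]) : ((Nc x)%:C)%C = x * conjc x.
Proof. case: x => a b; rewrite /Nc /=. apply/eqP; rewrite eq_complex /=; apply/andP; split; apply/eqP; ring. Qed.

Lemma Nc_norm {R : realType} (x : R[i]) : ((Nc x)%:C)%C = `|x| ^+ 2.
Proof. by rewrite -add_Re2_Im2; case: x. Qed.

Lemma normc_Nc {R : realType} (x : R[i]) : Normc.normc x = Num.sqrt (Nc x).
Proof. by case: x. Qed.

Lemma norm1_Nc {R : realType} (x : R[i]) : `|x| = 1 -> Nc x = 1.
Proof.
move=> H; have := Nc_norm x; rewrite H expr1n => /(congr1 (@complex.Re R)) /=. done.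
Qed.

Lemma Nc_norm1 {R : realType} (x : R[i]) : Nc x = 1 -> `|x| = 1.
Proof.
move=> H; rewrite normc_def; case: x H => a b /= ->; by rewrite sqrtr1.
Qed.

Lemma Hident {R : realType} (a b c d x y : R[i]) :
  Nc (a * x + b * y) - Nc (c * x + d * y) =
  (Nc a - Nc c) * Nc x + (Nc b - Nc d) * Nc y +
  2 * Rec ((a * conjc b - c * conjc d) * (x * conjc y)).
Proof.
case: a => a1 a2; case: b => b1 b2; case: c => c1 c2; case: d => d1 d2;
case: x => x1 x2; case: y => y1 y2; rewrite /Nc /Rec /=. ring.
Qed.

Lemma Hdet {R : realType} (a b c d : R[i]) :
  (Nc a - Nc c) * (Nc d - Nc b) - Nc (a * d - b * c) + Nc (a * conjc b - c * conjc d) = 0.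
Proof.
case: a => a1 a2; case: b => b1 b2; case: c => c1 c2; case: d => d1 d2;
rewrite /Nc /Rec /=. ring.
Qed.

Lemma Hcirc {R : realType} {a b c d : R[i]} :
  Nc (a + b) = Nc (c + d) -> Nc (- a + b) = Nc (- c + d) ->
  Nc (a * 'i%C + b) = Nc (c * 'i%C + d) ->
  Nc a + Nc b = Nc c + Nc d /\ a * conjc b - c * conjc d = 0.
Proof.
case: a => a1 a2; case: b => b1 b2; case: c => c1 c2; case: d => d1 d2;
rewrite /Nc /=. move=> e1 e2 e3; split; first nra.
apply/eqP; rewrite eq_complex /=; apply/andP; split; apply/eqP; nra.
Qed.
Lemma conjN {R : realType} (x : R[i]) : conjc (- x) = - conjc x.
Proof. by case: x => a b. Qed.

Lemma Kset_form {R : realType} (k : 'M[R[i]]_2) : Kset k ->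
  exists al be, k = mx2 al be (- conjc be) (conjc al) /\ Nc al + Nc be = 1.
Proof.
rewrite (mx2_eta k); set p := k i0 i0; set q := k i0 i1; set r := k i1 i0; set s := k i1 i1.
case; rewrite /SL2 mx2_det mx2_adj mx2_mul mx2_one => D /mx2_inj [X1 X2 X3 X4].
have Hs : s = conjc p.
  apply/eqP; rewrite -subr_eq0; apply/eqP.
  have -> : s - conjc p = - s * ((conjc p * p + conjc r * r) - 1) + r * (conjc p * q + conjc r * s)
     + conjc p * ((p * s - q * r) - 1) by ring.
  by rewrite X1 X2 D !subrr !mulr0 !addr0.
have Hr : r = - conjc q.
  apply/eqP; rewrite -subr_eq0 opprK; apply/eqP.
  have -> : r + conjc q = - r * ((conjc q * q + conjc s * s) - 1) + s * (conjc q * p + conjc s * r)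
     - conjc q * ((p * s - q * r) - 1) by ring.
  by rewrite X4 X3 D !subrr !mulr0 !subr0 addr0.
exists p, q; split; first by rewrite Hs Hr.
apply: (@complexI R); rewrite rmorphD /= !Nc_C.
move: X1; rewrite Hr conjN conjcK (_ : (1%:C)%C = 1) // => <-; ring.
Qed.

Lemma Kset_of {R : realType} {al be : R[i]} : Nc al + Nc be = 1 ->
  Kset (mx2 al be (- conjc be) (conjc al)).
Proof.
move=> H; have HC : al * conjc al + be * conjc be = 1.
  by rewrite -!Nc_C -rmorphD H.
split; first by rewrite /SL2 mx2_det -HC; ring.
rewrite mx2_adj mx2_mul mx2_one conjN !conjcK; congr mx2.
- by rewrite -HC; ring.
- ring.
- ring.
- by rewrite -HC; ring.
Qed.
Lemma circ_eq {R : realType} (h : 'M[R[i]]_2) (z : R[i]) : stabilizes_unit_circle h ->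
  `|z| = 1 -> Nc (h i0 i0 * z + h i0 i1) = Nc (h i1 i0 * z + h i1 i1).
Proof.
case=> H _ Hz; have [_ Hu] := H z Hz.
move: Hu; rewrite /unit_circle normf_div => /divr1_eq E.
by apply: (@complexI R); rewrite !Nc_norm E.
Qed.

Lemma Hset_form {R : realType} (h : 'M[R[i]]_2) : Hset h -> exists lam : R, lam ^+ 2 = 1 /\
  forall x y, Nc (h i0 i0 * x + h i0 i1 * y) - Nc (h i1 i0 * x + h i1 i1 * y)
              = lam * (Nc x - Nc y).
Proof.
case=> D Hst.
have e1 := circ_eq h 1 Hst (normr1 _).
have e2 := circ_eq h (-1) Hst (etrans (normrN _) (normr1 _)).
have e3 : Nc (h i0 i0 * 'i%C + h i0 i1) = Nc (h i1 i0 * 'i%C + h i1 i1).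
  by apply: circ_eq => //; apply: Nc_norm1; rewrite /Nc /=; ring.
move: D e1 e2 e3; rewrite /SL2 (mx2_eta h) mx2_det !mxE /=.
set a := h i0 i0; set b := h i0 i1; set c := h i1 i0; set d := h i1 i1.
rewrite !mulr1 !mulrN1 => D e1 e2 e3.
have [E1 P0] := Hcirc e1 e2 e3.
exists (Nc a - Nc c); split.
  have := Hdet a b c d; rewrite D P0.
  have -> : Nc (0 : R[i]) = 0 by rewrite /Nc /=; ring.
  have -> : Nc (1 : R[i]) = 1 by rewrite /Nc /=; ring.
  have -> : Nc d - Nc b = Nc a - Nc c by lra.
  by move=> H; rewrite expr2; lra.
move=> x y; rewrite Hident P0 mul0r.
have -> : Rec (0 : R[i]) = 0 by [].
have -> : Nc b - Nc d = - (Nc a - Nc c) by lra.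
ring.
Qed.
Lemma expR_half {R : realType} (t : R) : expR (t / 2) ^+ 2 = expR t.
Proof. by rewrite expr2 -expRD; congr expR; field. Qed.

Lemma core {R : realType} {t r : R} {k h k' : 'M[R[i]]_2} :
  Kset k -> Hset h -> Kset k' -> a_ t *m k = h *m k' *m a_ r ->
  exists al be al' be' lam,
    k = mx2 al be (- conjc be) (conjc al) /\ Nc al + Nc be = 1 /\ Nc al' + Nc be' = 1 /\
        lam ^+ 2 = 1 /\
        expR t * Nc al - expR (- t) * Nc be = lam * expR r * (Nc al' - Nc be') /\
        expR t * Nc be - expR (- t) * Nc al = lam * expR (- r) * (Nc be' - Nc al').
Proof.
move=> /Kset_form [al [be [-> Hk]]] /Hset_form [lam [Hl Hid]] /Kset_form [al' [be' [-> Hk']]].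
rewrite /a_ (mx2_eta h) !mx2_mul.
set E := ((expR (t / 2))%:C)%C; set F := ((expR (- t / 2))%:C)%C.
set E' := ((expR (r / 2))%:C)%C; set F' := ((expR (- r / 2))%:C)%C.
move=> /mx2_inj [q00 q01 q10 q11].
exists al, be, al', be', lam; do 4 (split => //); split.
- have := Hid (al' * E') (- conjc be' * E').
  have -> : h i0 i0 * (al' * E') + h i0 i1 * (- conjc be' * E') = E * al + 0 * - conjc be.
    by rewrite q00; ring.
  have -> : h i1 i0 * (al' * E') + h i1 i1 * (- conjc be' * E') = 0 * al + F * - conjc be.
    by rewrite q10; ring.
  rewrite !mul0r !add0r addr0 !NcM NcN !NcR NcJ !NcN NcJ !expR_half -mulrN.
  move=> ->; ring.
- have := Hid (be' * F') (conjc al' * F').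
  have -> : h i0 i0 * (be' * F') + h i0 i1 * (conjc al' * F') = E * be + 0 * conjc al.
    by rewrite q01; ring.
  have -> : h i1 i0 * (be' * F') + h i1 i1 * (conjc al' * F') = 0 * be + F * conjc al.
    by rewrite q11; ring.
  rewrite !mul0r !add0r addr0 !NcM !NcR !NcJ !expR_half -!mulNr.
  move=> ->; ring.
Qed.
Lemma Kset1 {R : realType} : Kset (1%:M : 'M[R[i]]_2).
Proof.
rewrite mx2_one.
have E : mx2 (1 : R[i]) 0 0 1 = mx2 1 0 (- conjc 0) (conjc 1).
  congr mx2; apply/eqP; rewrite eq_complex /=; apply/andP; split; apply/eqP; ring.
rewrite E; apply: Kset_of; rewrite /Nc /=; ring.
Qed.

Lemma Hset1 {R : realType} : Hset (1%:M : 'M[R[i]]_2).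
Proof.
split; first by rewrite /SL2 det1.
rewrite /stabilizes_unit_circle mx2_one; have [-> [-> [-> ->]]] := @mx2E R 1 0 0 1.
split.
  move=> z Hz; rewrite mul0r add0r mul1r addr0 divr1; split => //; exact: oner_neq0.
by move=> w Hw; exists w; rewrite mul0r add0r mul1r addr0 divr1.
Qed.

Lemma part1 {R : realType} (T t : R) : 1 < T -> 0 <= t < ln T -> K_T T t 1%:M.
Proof.
move=> _ /andP [t0 tT]; split; first exact: Kset1.
exists 1%:M, 1%:M, (a_ t); split; first exact: Hset1.
split; first exact: Kset1.
split; first by exists t; rewrite t0 (ltW tT).
by rewrite mulmx1 !mul1mx.
Qed.

Lemma part2 {R : realType} (T t : R) : 1 < T -> ln T < t -> forall k, ~ K_T T t k.
Proof.
move=> _ Tt k [Hk [h [k' [a [Hh [Hk' [[r [/andP [r0 rT] ->] E]]]]]]]].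
have [al [be [al' [be' [lam [_ [N1 [N2 [L [c0 c1]]]]]]]]]] := core Hk Hh Hk' E.
have rt : r < t by apply: le_lt_trans rT Tt.
have e1 : expR r < expR t by rewrite ltr_expR.
have e2 : expR (- t) < expR (- r) by rewrite ltr_expR ltrN2.
have e3 : expR (- r) <= expR r by rewrite ler_expR; lra.
have g1 := Nc_ge0 al'; have g2 := Nc_ge0 be'.
have Hp : (lam * (Nc al' - Nc be')) ^+ 2 <= 1.
  rewrite exprMn L mul1r; nra.
have Hq : lam * (Nc al' - Nc be') <= 1 by nra.
have S : expR t - expR (- t) = lam * (Nc al' - Nc be') * (expR r - expR (- r)).
  have -> : expR t - expR (- t) = expR t * (Nc al + Nc be) - expR (- t) * (Nc al + Nc be)
    by rewrite N1; ring.
  have -> : expR t * (Nc al + Nc be) - expR (- t) * (Nc al + Nc be) =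
    (expR t * Nc al - expR (- t) * Nc be) + (expR t * Nc be - expR (- t) * Nc al) by ring.
  rewrite c0 c1; ring.
nra.
Qed.
Lemma conjM {R : realType} (x y : R[i]) : conjc (x * y) = conjc x * conjc y.
Proof.
case: x => a b; case: y => c d; apply/eqP; rewrite eq_complex /=.
by apply/andP; split; apply/eqP; ring.
Qed.

Lemma conj_invN1 {R : realType} {z : R[i]} : Nc z = 1 -> z^-1 = conjc z.
Proof.
move=> H; have Hz : z * conjc z = 1 by rewrite -Nc_C H.
have nz : z != 0 by apply/eqP => z0; move: Hz; rewrite z0 mul0r => /eqP; rewrite eq_sym oner_eq0.
by apply: (mulfI nz); rewrite mulfV.
Qed.

Lemma mxnorm_mx2 {R : realType} (a b c d : R[i]) :
  mxnorm (mx2 a b c d) = Num.sqrt (Nc a) + Num.sqrt (Nc b) + Num.sqrt (Nc c) + Num.sqrt (Nc d).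
Proof.
rewrite /mxnorm big2 !big2; have [-> [-> [-> ->]]] := mx2E a b c d.
rewrite !normc_Nc; ring.
Qed.

Lemma part3 {R : realType} (dist : 'M[R[i]]_2 -> 'M[R[i]]_2 -> R) :
  left_inv_metric dist -> forall eps : R, 0 < eps -> exists2 T0 : R, 1 <= T0 &
        forall T t : R, 1 < T -> T0 < t ->
          forall k, K_T T t k -> K_eps_M dist eps k.
Proof.
move=> [_ [_ [_ [_ [_ [_ [H7 _]]]]]]] eps eps0.
have [del del0 Hdel] := H7 eps eps0.
set d := Num.min del 1.
have d0 : 0 < d by rewrite lt_min del0 ltr01.
have d1 : d <= 1 by rewrite ge_min lexx orbT.
have dd : d <= del by rewrite ge_min lexx.
have X0 : 1 <= 64 / d ^+ 2.
  rewrite ler_pdivlMr ?exprn_gt0 // mul1r; nra.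
exists (1 + ln (64 / d ^+ 2)); first by have := ln_ge0 X0; lra.
move=> T t _ Tt k [Hk [h [k' [a [Hh [Hk' [[r [/andP [r0 rT] ->] E]]]]]]]].
have [al [be [al' [be' [lam [-> [N1 [N2 [L [c0 c1]]]]]]]]]] := core Hk Hh Hk' E.
have lnp : 0 <= ln (64 / d ^+ 2) := ln_ge0 X0.
have et : 64 / d ^+ 2 < expR t.
  rewrite -[X in X < _](lnK (x := 64 / d ^+ 2)); last by rewrite posrE; lra.
  by rewrite ltr_expR; lra.
have er : expR (- r) <= 1 by rewrite expR_le1; lra.
have er0 : 0 < expR (- r) := expR_gt0 _.
have eti : expR (- t) <= 1 by rewrite expR_le1; lra.
have et0 : 0 < expR (- t) := expR_gt0 _.
have g1 := Nc_ge0 al'; have g2 := Nc_ge0 be'.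
have ga := Nc_ge0 al; have gb := Nc_ge0 be.
have Hp : (lam * (Nc be' - Nc al')) ^+ 2 <= 1.
  rewrite exprMn L mul1r; nra.
have Hq : lam * (Nc be' - Nc al') <= 1 by nra.
have B1 : expR t * Nc be <= 2.
  have : lam * expR (- r) * (Nc be' - Nc al') <= 1.
    have -> : lam * expR (- r) * (Nc be' - Nc al') = lam * (Nc be' - Nc al') * expR (- r) by ring.
    nra.
  rewrite -c1; nra.
have d2 : 0 < d ^+ 2 by rewrite exprn_gt0.
have B2 : Nc be * 32 < d ^+ 2.
  have etp : 0 < expR t := expR_gt0 _.
  have : 64 < expR t * d ^+ 2 by move: et; rewrite ltr_pdivrMr.
  nra.
clear c0 c1 ga; move: N1 B2; case: al => a1 a2 N1 B2.
set rho := Num.sqrt (a1 ^+ 2 + a2 ^+ 2).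
have Na : Nc (a1 +i* a2)%C = a1 ^+ 2 + a2 ^+ 2 by [].
have rho2 : rho ^+ 2 = a1 ^+ 2 + a2 ^+ 2 by rewrite sqr_sqrtr //; nra.
have rho0 : 0 <= rho := sqrtr_ge0 _.
have rhop : 0 < rho by rewrite lt_neqAle rho0 andbT; apply/eqP => r0'; move: rho2; rewrite -r0'; nra.
set z := ((a1 / rho) +i* (a2 / rho))%C.
have Nz : Nc z = 1.
  by rewrite /Nc /z !expr_div_n -mulrDl -rho2 divff // expf_neq0 // gt_eqF.
have Hzz : z * conjc z = 1 by rewrite -Nc_C Nz.
have Nk1 : Nc ((rho%:C)%C) + Nc (be * z) = 1.
  by rewrite NcR NcM Nz mulr1 rho2 -Na.
have Hrz : (rho%:C)%C * z = (a1 +i* a2)%C.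
  apply/eqP; rewrite eq_complex /=; apply/andP; split; apply/eqP; field; lra.
have Kk1 := Kset_of Nk1.
exists (mx2 (rho%:C)%C (be * z) (- conjc (be * z)) (conjc (rho%:C)%C)), (mx2 z 0 0 z^-1).
split; last split.
- split => //; apply: Hdel; first by case: Kk1.
  rewrite mx2_one mx2_sub mxnorm_mx2 !subr0 NcN !NcJ NcM Nz mulr1 conjc_real.
  have -> : Nc ((rho%:C)%C - 1) = (rho - 1) ^+ 2 by rewrite /Nc /=; ring.
  rewrite sqrtr_sqr.
  have rho1 : rho <= 1 by nra.
  rewrite ler0_norm; last lra.
  set s := Num.sqrt (Nc be).
  have s2 : s ^+ 2 = Nc be by rewrite sqr_sqrtr.
  have s0 : 0 <= s := sqrtr_ge0 _.
  have h1 : 1 - rho <= s ^+ 2 by nra.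
  have h2 : 4 * s < d by nra.
  have h3 : 2 * s ^+ 2 <= s / 2 by nra.
  lra.
- by exists z; split => //; apply: Nc_norm1.
- rewrite mx2_mul (conj_invN1 Nz) !mulr0 !addr0 !add0r; congr mx2.
  + by rewrite Hrz.
  + by rewrite -mulrA Hzz mulr1.
  + by rewrite rmorphM /= mulNr -mulrA (mulrC (conjc z)) Hzz mulr1.
  + by rewrite -conjM Hrz.
Qed.
Local Close Scope complex_scope.

Theorem corollary4p3 (R : realType) (dist : 'M[R[i]]_2 -> 'M[R[i]]_2 -> R) :
  left_inv_metric dist ->
  (forall T t : R, 1 < T -> 0 <= t < ln T -> K_T T t 1%:M)
  /\ (forall T t : R, 1 < T -> ln T < t -> forall k, ~ K_T T t k)
  /\ (forall eps : R, 0 < eps -> exists2 T0 : R, 1 <= T0 &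
        forall T t : R, 1 < T -> T0 < t ->
          forall k, K_T T t k -> K_eps_M dist eps k).
Proof.
move=> Hd; split; first exact: part1.
split; first exact: part2.
exact: part3.
Qed.
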